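(* Let $G$ be a group with a regular gliding system. For any set $\mathcal{D}\subset G$, the glide complex $X_{\mathcal{D}}$ is nonpositively curved if and only if $\mathcal{D}$ satisfies the cube condition. In particular, $X_G$ is nonpositively curved.
   Context: Gliding system $(\mathcal{G},\mathcal{I})$ in $G$: $\mathcal{G}\subset G\setminus\{1\}$ closed under inversion (glides), $\mathcal{I}\subset\mathcal{G}\times\mathcal{G}$ (independence) with $(s^{-1},t),(t,s)\in\mathcal{I}$ and $st=ts\ne1$ whenever $(s,t)\in\mathcal{I}$. Pre-cubic set: finite set $S$ of pairwise independent glides, $[S]=\prod_{s\in S}s$; cubic: pre-cubic with $[T_1]\ne[T_2]$ for distinct $T_1,T_2\subset S$. The gliding system is regular if every pre-cubic set is cubic. Glide complex $X_G$: cubed complex with one $k$-cube for each equivalence class of based cubes $(A,S)$ ($A\in G$, $S$ cubic of size $k$) under $(A,S)\sim([T]A,(S\setminus T)\cup\{t^{-1}:t\in T\})$, $T\subset S$; vertices $[T]A$, faces the cubes of $(A,S')$, $S'\subset S$. $X_{\mathcal{D}}$: subcomplex of cubes all of whose vertices lie in $\mathcal{D}$. Cube condition on $\mathcal{D}$: for every $A\in\mathcal{D}$ and pairwise independent glides $s_1,s_2,s_3$ with $s_iA\in\mathcal{D}$ and $s_is_jA\in\mathcal{D}$ for all $i\ne j$, one has $s_1s_2s_3A\in\mathcal{D}$. Nonpositively curved: links of $0$-cells are simplicial flag complexes. *)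

(* Defs.v *)
(* groups here may be infinite, so we use an explicit record. *)
From Stdlib Require Import List Relations.
Import ListNotations.
Set Implicit Arguments.

Record Group := {
  carrier :> Type;
  mul : carrier -> carrier -> carrier;
  one : carrier;
  inv : carrier -> carrier;
  mulA : forall x y z, mul x (mul y z) = mul (mul x y) z;
  mul1g : forall x, mul one x = x;
  mulg1 : forall x, mul x one = x;
  mulVg : forall x, mul (inv x) x = one;
  mulgV : forall x, mul x (inv x) = one
}.

Arguments mul {g}.
Arguments one {g}.
Arguments inv {g}.

Record GlidingSystem (G : Group) := {
  glide : G -> Prop;
  indep : G -> G -> Prop;
  glide_ne1 : forall s, glide s -> s <> one;
  glide_inv : forall s, glide s -> glide (inv s);
  indep_glides : forall s t, indep s t -> glide s /\ glide t;
  indep_inv : forall s t, indep s t -> indep (inv s) t;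
  indep_sym : forall s t, indep s t -> indep t s;
  indep_comm : forall s t, indep s t -> mul s t = mul t s;
  indep_ne1 : forall s t, indep s t -> mul s t <> one
}.

Section Glide.
Variable G : Group.
Variable GS : GlidingSystem G.

(** Finite sets of group elements are duplicate-free lists. *)
Definition sameset (T1 T2 : list G) : Prop := forall x, In x T1 <-> In x T2.
Definition subl (T S : list G) : Prop := NoDup T /\ incl T S.

(** [S] = product of the elements of S (order irrelevant for pairwise
    commuting elements). *)
Definition prodl (S : list G) : G := fold_right mul one S.

Definition pre_cubic (S : list G) : Prop :=
  NoDup S /\ (forall s, In s S -> glide GS s) /\
  (forall s t, In s S -> In t S -> s <> t -> indep GS s t).

Definition cubic (S : list G) : Prop :=
  pre_cubic S /\
  (forall T1 T2, subl T1 S -> subl T2 S -> ~ sameset T1 T2 -> prodl T1 <> prodl T2).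

Definition regular : Prop := forall S, pre_cubic S -> cubic S.

(** Based cubes (A,S); the generating relation
    (A,S) ~ ([T]A, (S \ T) u T^{-1}),  T subset S. *)
Definition based_cube := (G * list G)%type.

Definition cube_rel (c c' : based_cube) : Prop :=
  let (A, S) := c in let (B, S') := c' in
  cubic S /\ cubic S' /\
  exists T, subl T S /\ B = mul (prodl T) A /\
    (forall x, In x S' <-> ((In x S /\ ~ In x T) \/ exists t, In t T /\ x = inv t)).

(** Cubes of X_G are equivalence classes for the equivalence generated by ~. *)
Definition cube_equiv : relation based_cube := clos_refl_sym_trans _ cube_rel.

(** A based cube is a cube of X_D iff all its vertices [T]A lie in D. *)
Definition in_XD (D : G -> Prop) (c : based_cube) : Prop :=
  cubic (snd c) /\ forall T, subl T (snd c) -> D (mul (prodl T) (fst c)).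

(** A corner at v of a cube C of X_D is a
    based representative (v,S) of C; its (simplex-)vertices are the corners
    at v of its edges, i.e. the glides s in S (edge (v,[s])).  We record a
    simplex of the link by its list S of vertices. *)
Definition link_simplex (D : G -> Prop) (v : G) (S : list G) : Prop :=
  S <> [] /\ cubic S /\ exists c, in_XD D c /\ cube_equiv (v, S) c.

Definition link_vertex (D : G -> Prop) (v : G) (s : G) : Prop :=
  link_simplex D v [s].

Definition link_simplicial (D : G -> Prop) (v : G) : Prop :=
  (forall S, link_simplex D v S -> NoDup S /\ forall s, In s S -> link_vertex D v s) /\
  (forall S S', link_simplex D v S -> S' <> [] -> subl S' S -> link_simplex D v S').

Definition link_flag (D : G -> Prop) (v : G) : Prop :=
  forall S, S <> [] -> NoDup S ->
    (forall s, In s S -> link_vertex D v s) ->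
    (forall s t, In s S -> In t S -> s <> t -> link_simplex D v [s; t]) ->
    link_simplex D v S.

Definition NPC (D : G -> Prop) : Prop :=
  forall v, in_XD D (v, []) -> link_simplicial D v /\ link_flag D v.

Definition cube_condition (D : G -> Prop) : Prop :=
  forall A s1 s2 s3, D A ->
    s1 <> s2 -> s1 <> s3 -> s2 <> s3 ->
    indep GS s1 s2 -> indep GS s1 s3 -> indep GS s2 s3 ->
    D (mul s1 A) -> D (mul s2 A) -> D (mul s3 A) ->
    D (mul s1 (mul s2 A)) -> D (mul s1 (mul s3 A)) -> D (mul s2 (mul s3 A)) ->
    D (mul s1 (mul s2 (mul s3 A))).

End Glide.

(* Main.v *)
Require Import Defs.
From Stdlib Require Import List Relations Permutation ClassicalEpsilon Classical Bool Lia.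
Import ListNotations.
Arguments prodl {G} S.
Arguments prodl {G} S.
Arguments subl {G} T S.

Lemma invK (G:Group) (x:G) : inv (inv x) = x.
Proof.
  rewrite <- (mulg1 G (inv (inv x))). rewrite <- (mulVg G x). rewrite mulA.
  rewrite mulVg. apply mul1g.
Qed.

Lemma inv_uniq (G:Group) (a b:G) : mul a b = one -> a = inv b.
Proof.
  intro H. rewrite <- (mulg1 G a). rewrite <- (mulgV G b). rewrite mulA. rewrite H. apply mul1g.
Qed.

Definition comm (G:Group) (a b : G) := mul a b = mul b a.

Lemma comm_sym (G:Group) (a b:G) : comm G a b -> comm G b a.
Proof. unfold comm; auto. Qed.

Lemma comm_inv (G:Group) (a b:G) : comm G a b -> comm G a (inv b).
Proof.
  unfold comm; intro H.
  rewrite <- (mul1g _ (mul a (inv b))). rewrite <- (mulVg _ b). rewrite <- mulA.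
  rewrite (mulA _ b a). rewrite <- H. rewrite <- (mulA _ a b), mulgV, mulg1. reflexivity.
Qed.

Lemma comm_prod (G:Group) (a:G) L : (forall x, In x L -> comm G a x) -> comm G a (prodl L).
Proof.
  induction L as [|y L IH]; intro H; unfold comm; simpl.
  - rewrite mulg1, mul1g; reflexivity.
  - rewrite mulA. rewrite (H y (or_introl eq_refl)). rewrite <- mulA.
    rewrite IH by (intros; apply H; simpl; auto). rewrite mulA. reflexivity.
Qed.

Definition PC (G:Group) (L : list G) := forall x y, In x L -> In y L -> comm G x y.

Lemma PC_sub (G:Group) (L L' : list G) : PC G L -> incl L' L -> PC G L'.
Proof. unfold PC; intros H Hi x y Hx Hy; apply H; auto. Qed.

Lemma prodl_app (G:Group) (l1 l2 : list G) : prodl (l1 ++ l2) = mul (prodl l1) (prodl l2).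
Proof.
  induction l1; simpl. rewrite mul1g; reflexivity. rewrite IHl1, mulA; reflexivity.
Qed.

Lemma prodl_perm (G:Group) (l1 l2 : list G) : Permutation l1 l2 -> PC G l1 -> prodl l1 = prodl l2.
Proof.
  intro Hp; induction Hp; intro H; simpl.
  - reflexivity.
  - rewrite IHHp. reflexivity. eapply PC_sub; [exact H|]. intros z Hz; simpl; auto.
  - rewrite !mulA. rewrite (H y x) by (simpl; auto). reflexivity.
  - rewrite IHHp1 by exact H. apply IHHp2.
    intros a b Ha Hb. apply H; (eapply Permutation_in; [apply Permutation_sym; exact Hp1| assumption]).
Qed.

Lemma prod_inv (G:Group) (L : list G) : PC G L -> mul (prodl (map inv L)) (prodl L) = one.
Proof.
  induction L as [|a L IH]; intro H; simpl.
  - apply mul1g.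
  - assert (Hc : comm G a (prodl (map inv L))).
    { apply comm_prod. intros x Hx. apply in_map_iff in Hx. destruct Hx as [y [<- Hy]].
      apply comm_inv. apply H; simpl; auto. }
    rewrite <- mulA. rewrite (mulA _ (prodl (map inv L)) a). rewrite <- Hc.
    rewrite <- mulA. rewrite (mulA _ (inv a) a). rewrite mulVg, mul1g.
    apply IH. eapply PC_sub; [exact H|]. intros z Hz; simpl; auto.
Qed.

Lemma filter_split (G:Group) (f g : G -> bool) (l : list G) :
  (forall x, g x = negb (f x)) -> PC G l ->
  prodl l = mul (prodl (filter f l)) (prodl (filter g l)).
Proof.
  intro Hg; induction l as [|a l IH]; intro H; simpl.
  - rewrite mul1g; reflexivity.
  - assert (Hl : PC G l) by (eapply PC_sub; [exact H|]; intros z Hz; simpl; auto).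
    rewrite Hg. destruct (f a) eqn:Ef; simpl.
    + rewrite IH by exact Hl. rewrite mulA; reflexivity.
    + rewrite IH by exact Hl. rewrite mulA.
      assert (Hc : comm G a (prodl (filter f l))).
      { apply comm_prod. intros x Hx. apply filter_In in Hx. apply H; simpl; tauto. }
      rewrite Hc, <- mulA. reflexivity.
Qed.

Definition memb {G:Group} (x:G) (L:list G) : bool :=
  if excluded_middle_informative (In x L) then true else false.

Lemma memb_spec (G:Group) (x:G) L : memb x L = true <-> In x L.
Proof. unfold memb; destruct (excluded_middle_informative (In x L)); split; auto; discriminate. Qed.

Lemma memb_false (G:Group) (x:G) L : memb x L = false <-> ~ In x L.
Proof. unfold memb; destruct (excluded_middle_informative (In x L)); split; auto; try discriminate; tauto. Qed.

Lemma precubic_PC (G:Group) (GS:GlidingSystem G) S : pre_cubic GS S -> PC G S.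
Proof.
  intros [_ [_ H]] x y Hx Hy. destruct (classic (x = y)) as [<-|Hne].
  - reflexivity.
  - apply (indep_comm GS). auto.
Qed.

Lemma no_inv (G:Group) (GS:GlidingSystem G) S x t : pre_cubic GS S ->
  In x S -> In t S -> x <> t -> x = inv t -> False.
Proof.
  intros [_ [_ H]] Hx Ht Hne E. apply (indep_ne1 GS x t); auto. subst. apply mulVg.
Qed.

Lemma NoDup_map_ginv (G:Group) (l : list G) : NoDup l -> NoDup (map inv l).
Proof.
  intro H. apply FinFun.Injective_map_NoDup; auto.
  intros a b E. rewrite <- (invK G a), <- (invK G b), E. reflexivity.
Qed.

Lemma vert2 (G:Group) (GS:GlidingSystem G) (A : G) S T S' :
  cubic GS S -> subl T S ->
  (forall x, In x S' <-> ((In x S /\ ~ In x T) \/ exists t, In t T /\ x = inv t)) ->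
  forall U, subl U S -> exists U', subl U' S' /\
     mul (prodl U') (mul (prodl T) A) = mul (prodl U) A.
Proof.
  intros [HS _] [HTn HTi] HS' U [HUn HUi].
  assert (PS : PC G S) by (apply (precubic_PC G GS); exact HS).
  set (F1 := filter (fun x => negb (memb x T)) U).
  set (F2 := filter (fun x => negb (memb x U)) T).
  set (F3 := filter (fun x => memb x U) T).
  set (G1 := filter (fun x => memb x T) U).
  exists (F1 ++ map inv F2). split.
  - split.
    + apply NoDup_app.
      * apply NoDup_filter; exact HUn.
      * apply NoDup_map_ginv. apply NoDup_filter; exact HTn.
      * intros x Hx Hx2. unfold F1 in Hx. apply filter_In in Hx. destruct Hx as [Hx Hm].
        apply in_map_iff in Hx2. destruct Hx2 as [t [Et Ht]]. unfold F2 in Ht.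
        apply filter_In in Ht. destruct Ht as [Ht _].
        apply (no_inv G GS S x t HS); auto.
        intro E; subst t. apply negb_true_iff, memb_false in Hm. tauto.
    + intros x Hx. apply in_app_or in Hx. apply HS'. destruct Hx as [Hx|Hx].
      * left. unfold F1 in Hx. apply filter_In in Hx. destruct Hx as [Hx Hm].
        apply negb_true_iff, memb_false in Hm. auto.
      * right. apply in_map_iff in Hx. destruct Hx as [t [Et Ht]]. unfold F2 in Ht.
        apply filter_In in Ht. exists t; split; [tauto| symmetry; exact Et].
  - assert (PT : PC G T) by (eapply PC_sub; [exact PS|exact HTi]).
    assert (PU : PC G U) by (eapply PC_sub; [exact PS|exact HUi]).
    rewrite prodl_app.
    rewrite (filter_split G (fun x => memb x U) (fun x => negb (memb x U)) T) by auto.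
    rewrite (filter_split G (fun x => negb (memb x T)) (fun x => memb x T) U)
      by (auto; intro; rewrite negb_involutive; reflexivity).
    fold F1 F2 F3 G1.
    assert (E1 : prodl G1 = prodl F3).
    { apply prodl_perm.
      - apply NoDup_Permutation.
        + apply NoDup_filter; exact HUn.
        + apply NoDup_filter; exact HTn.
        + intro x; unfold G1, F3; rewrite !filter_In, !memb_spec; tauto.
      - eapply PC_sub; [exact PU|]. intros z Hz; unfold G1 in Hz; apply filter_In in Hz; tauto. }
    rewrite E1.
    assert (PF2 : PC G F2).
    { eapply PC_sub; [exact PT|]. intros z Hz; unfold F2 in Hz; apply filter_In in Hz; tauto. }
    assert (Hc : comm G (prodl F3) (prodl (map inv F2))).
    { apply comm_prod. intros x Hx. apply in_map_iff in Hx. destruct Hx as [t [<- Ht]].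
      apply comm_inv. apply comm_sym. apply comm_prod. intros y Hy.
      unfold F2 in Ht; unfold F3 in Hy. apply filter_In in Ht. apply filter_In in Hy.
      apply PT; tauto. }
    assert (E2 : mul (prodl (map inv F2)) (mul (prodl F3) (prodl F2)) = prodl F3).
    { rewrite mulA. rewrite <- Hc. rewrite <- mulA. rewrite (prod_inv G F2 PF2). apply mulg1. }
    rewrite <- !mulA. f_equal. rewrite (mulA _ (prodl F3)). rewrite (mulA _ (prodl (map inv F2))).
    rewrite E2. reflexivity.
Qed.

Lemma cube_rel_sym (G:Group) (GS:GlidingSystem G) c c' : cube_rel GS c c' -> cube_rel GS c' c.
Proof.
  destruct c as [A S], c' as [B S']; simpl.
  intros [HS [HS' [T [[HTn HTi] [EB Hch]]]]].
  split; [exact HS'|split; [exact HS|]]. exists (map inv T).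
  assert (PT : PC G T) by (eapply PC_sub; [apply (precubic_PC G GS); apply HS| exact HTi]).
  split; [split|split].
  - apply NoDup_map_ginv; exact HTn.
  - intros x Hx. apply in_map_iff in Hx. destruct Hx as [t [Et Ht]]. apply Hch. right.
    exists t; split; [exact Ht| symmetry; exact Et].
  - rewrite EB, mulA, (prod_inv G T PT), mul1g. reflexivity.
  - intro x. split.
    + intro Hx. destruct (classic (In x T)) as [HxT|HxT].
      * right. exists (inv x). split; [apply in_map; exact HxT| symmetry; apply invK].
      * left. split; [apply Hch; left; auto|].
        intro Hm. apply in_map_iff in Hm. destruct Hm as [t [Et Ht]].
        apply (no_inv G GS S x t (proj1 HS)); auto.
        intro E; rewrite E in HxT; tauto.
    + intros [[Hx Hn]|[t' [Ht' Ex]]].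
      * apply Hch in Hx. destruct Hx as [[Hx _]|[t [Ht Ex]]]; [exact Hx|].
        exfalso. apply Hn. subst. apply in_map; exact Ht.
      * apply in_map_iff in Ht'. destruct Ht' as [t [Et Ht]]. subst. rewrite invK. auto.
Qed.

Lemma in_XD_back (G:Group) (GS:GlidingSystem G) D c c' :
  cube_rel GS c c' -> in_XD GS D c' -> in_XD GS D c.
Proof.
  destruct c as [A S], c' as [B S']; simpl.
  intros [HS [HS' [T [HT [EB Hch]]]]] [_ HD]. split; [exact HS|]. simpl.
  intros U HU. destruct (vert2 G GS A S T S' HS HT Hch U HU) as [U' [HU' E]].
  rewrite <- E, <- EB. apply HD. exact HU'.
Qed.

Lemma in_XD_equiv (G:Group) (GS:GlidingSystem G) D c c' :
  cube_equiv GS c c' -> (in_XD GS D c <-> in_XD GS D c').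
Proof.
  intro H; induction H.
  - split; [apply in_XD_back; apply cube_rel_sym; exact H| apply in_XD_back; exact H].
  - tauto.
  - tauto.
  - tauto.
Qed.

Lemma link_in_XD (G:Group) (GS:GlidingSystem G) D v S :
  link_simplex GS D v S -> in_XD GS D (v, S).
Proof.
  intros [_ [_ [c [Hc Heq]]]]. apply (in_XD_equiv G GS D _ _ Heq). exact Hc.
Qed.

Lemma prod_cons (G:Group) (x:G) l v : mul (prodl (x::l)) v = mul x (mul (prodl l) v).
Proof. simpl. rewrite mulA. reflexivity. Qed.

Lemma subl_nil (G:Group) : subl (@nil G) (@nil G).
Proof. split; [constructor| intros x H; exact H]. Qed.

Lemma subl_nil_inv (G:Group) (U : list G) : subl U [] -> U = [].
Proof. intros [_ H]. destruct U as [|x U]; auto. exfalso. apply (H x). left; auto. Qed.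

Lemma cubic_sub (G:Group) (GS:GlidingSystem G) (Hreg : regular GS) S S' :
  pre_cubic GS S -> NoDup S' -> incl S' S -> cubic GS S'.
Proof.
  intros [_ [Hg Hi]] Hn Hs. apply Hreg. split; [exact Hn|split].
  - intros s Hs'. apply Hg, Hs, Hs'.
  - intros s t H1 H2 H3. apply Hi; auto.
Qed.

Lemma backward (G:Group) (GS:GlidingSystem G) (Hreg : regular GS) D :
  cube_condition GS D -> NPC GS D.
Proof.
  intros Hcc v Hv.
  assert (Dv : D v).
  { destruct Hv as [_ H]. specialize (H [] (subl_nil G)). simpl in H. rewrite mul1g in H. exact H. }
  split.
  - split.
    + intros S HL. pose proof (link_in_XD G GS D v S HL) as [HSc HD].
      destruct HL as [Hne [Hc _]]. split; [exact (proj1 (proj1 Hc))|].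
      intros s Hs. unfold link_vertex, link_simplex.
      assert (Hc1 : cubic GS [s]).
      { apply (cubic_sub G GS Hreg S); [exact (proj1 Hc)| repeat constructor; simpl; tauto |].
        intros z Hz; simpl in Hz; destruct Hz as [<-|[]]; exact Hs. }
      split; [discriminate|split; [exact Hc1|]]. exists (v,[s]). split; [|apply rst_refl].
      split; [exact Hc1|]. simpl. intros U [HUn HUi]. apply HD. split; [exact HUn|].
      intros z Hz. specialize (HUi z Hz). simpl in HUi. destruct HUi as [<-|[]]. exact Hs.
    + intros S S' HL Hne [Hn Hs]. pose proof (link_in_XD G GS D v S HL) as [HSc HD].
      destruct HL as [_ [Hc _]].
      assert (Hc1 : cubic GS S') by (apply (cubic_sub G GS Hreg S); auto; exact (proj1 Hc)).
      split; [exact Hne|split; [exact Hc1|]]. exists (v,S'). split; [|apply rst_refl].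
      split; [exact Hc1|]. simpl. intros U [HUn HUi]. apply HD. split; [exact HUn|].
      intros z Hz; apply Hs, HUi, Hz.
  - intros S Hne Hnd Hvx Hedge.
    assert (HP : pre_cubic GS S).
    { split; [exact Hnd|split].
      - intros s Hs. destruct (Hvx s Hs) as [_ [[[_ [Hg _]] _] _]]. apply Hg; left; auto.
      - intros s t Hs Ht Hst. destruct (Hedge s t Hs Ht Hst) as [_ [[[_ [_ Hi]] _] _]].
        apply Hi; simpl; auto. }
    assert (HcS : cubic GS S) by (apply Hreg; exact HP).
    split; [exact Hne|split; [exact HcS|]]. exists (v,S). split; [|apply rst_refl].
    split; [exact HcS|]. simpl.
    assert (K : forall n U, length U <= n -> subl U S -> D (mul (prodl U) v)).
    { induction n as [|n IH]; intros U Hlen [HUn HUi].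
      - destruct U; [simpl; rewrite mul1g; exact Dv| simpl in Hlen; lia].
      - destruct U as [|s1 [|s2 [|s3 R]]].
        + simpl; rewrite mul1g; exact Dv.
        + destruct (link_in_XD G GS D v [s1] (Hvx s1 (HUi s1 (or_introl eq_refl)))) as [_ H].
          apply H. split; [exact HUn| intros z Hz; exact Hz].
        + assert (Hne12 : s1 <> s2).
          { intro E; subst. inversion HUn; subst. simpl in *; tauto. }
          destruct (link_in_XD G GS D v [s1;s2]
             (Hedge s1 s2 (HUi s1 ltac:(simpl; auto)) (HUi s2 ltac:(simpl; auto)) Hne12)) as [_ H].
          apply H. split; [exact HUn| intros z Hz; exact Hz].
        + assert (KK : forall W, incl W (s1::s2::s3::R) -> NoDup W -> length W <= n ->
                   D (mul (prodl W) v)).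
          { intros W HW HWn HWl. apply IH; [exact HWl|]. split; [exact HWn|].
            intros z Hz; apply HUi, HW, Hz. }
          simpl in Hlen.
          apply NoDup_cons_iff in HUn as [N1 HUn]. apply NoDup_cons_iff in HUn as [N2 HUn].
          apply NoDup_cons_iff in HUn as [N3 NR].
          destruct HP as [_ [_ Hind]].
          assert (I1 : In s1 S) by (apply HUi; simpl; auto).
          assert (I2 : In s2 S) by (apply HUi; simpl; auto).
          assert (I3 : In s3 S) by (apply HUi; simpl; auto).
          assert (d12 : s1 <> s2) by (intro E; subst; simpl in *; tauto).
          assert (d13 : s1 <> s3) by (intro E; subst; simpl in *; tauto).
          assert (d23 : s2 <> s3) by (intro E; subst; simpl in *; tauto).
          rewrite !prod_cons. apply Hcc; auto.
          * apply KK; [intros z Hz; simpl in *; tauto| exact NR| simpl; lia].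
          * pose proof (KK (s1::R)) as X; rewrite prod_cons in X; apply X;
              [intros z Hz; simpl in *; tauto| constructor; simpl in *; tauto| simpl; lia].
          * pose proof (KK (s2::R)) as X; rewrite prod_cons in X; apply X;
              [intros z Hz; simpl in *; tauto| constructor; simpl in *; tauto| simpl; lia].
          * pose proof (KK (s3::R)) as X; rewrite prod_cons in X; apply X;
              [intros z Hz; simpl in *; tauto| constructor; simpl in *; tauto| simpl; lia].
          * pose proof (KK (s1::s2::R)) as X; rewrite !prod_cons in X; apply X;
              [intros z Hz; simpl in *; tauto| repeat constructor; simpl in *; tauto| simpl; lia].
          * pose proof (KK (s1::s3::R)) as X; rewrite !prod_cons in X; apply X;
              [intros z Hz; simpl in *; tauto| repeat constructor; simpl in *; tauto| simpl; lia].
          * pose proof (KK (s2::s3::R)) as X; rewrite !prod_cons in X; apply X;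
              [intros z Hz; simpl in *; tauto| repeat constructor; simpl in *; tauto| simpl; lia]. }
    intros U HU. apply (K (length U)); auto.
Qed.

Lemma sub1 (G:Group) (a:G) U : subl U [a] -> U = [] \/ U = [a].
Proof.
  intros [Hn Hi]. destruct U as [|x [|y U]]; auto.
  - right. specialize (Hi x (or_introl eq_refl)). simpl in Hi. destruct Hi as [<-|[]]; auto.
  - exfalso. assert (Hx := Hi x ltac:(simpl; auto)). assert (Hy := Hi y ltac:(simpl; auto)).
    simpl in Hx, Hy. inversion Hn; subst. destruct Hx as [<-|[]]; destruct Hy as [<-|[]].
    simpl in *; tauto.
Qed.

Lemma sub2 (G:Group) (a b:G) U : a <> b -> subl U [a;b] ->
  U = [] \/ U = [a] \/ U = [b] \/ U = [a;b] \/ U = [b;a].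
Proof.
  intros Hab [Hn Hi]. destruct U as [|x [|y [|z U]]]; auto.
  - specialize (Hi x (or_introl eq_refl)). simpl in Hi. destruct Hi as [<-|[<-|[]]]; auto.
  - assert (Hx := Hi x ltac:(simpl; auto)). assert (Hy := Hi y ltac:(simpl; auto)).
    simpl in Hx, Hy. inversion Hn; subst.
    destruct Hx as [<-|[<-|[]]]; destruct Hy as [<-|[<-|[]]]; simpl in *; tauto.
  - exfalso. assert (Hx := Hi x ltac:(simpl; auto)). assert (Hy := Hi y ltac:(simpl; auto)).
    assert (Hz := Hi z ltac:(simpl; auto)).
    simpl in Hx, Hy, Hz. apply NoDup_cons_iff in Hn as [N1 Hn]. apply NoDup_cons_iff in Hn as [N2 _].
    destruct Hx as [<-|[<-|[]]]; destruct Hy as [<-|[<-|[]]]; destruct Hz as [<-|[<-|[]]];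
      simpl in *; tauto.
Qed.

Lemma vertex_ls (G:Group) (GS:GlidingSystem G) (Hreg : regular GS) D (A s : G) :
  glide GS s -> D A -> D (mul s A) -> link_simplex GS D A [s].
Proof.
  intros Hg HA HsA.
  assert (Hc : cubic GS [s]).
  { apply Hreg. split; [repeat constructor; simpl; tauto| split].
    - intros x Hx; simpl in Hx; destruct Hx as [<-|[]]; exact Hg.
    - intros x y Hx Hy; simpl in *; destruct Hx as [<-|[]]; destruct Hy as [<-|[]]; tauto. }
  split; [discriminate| split; [exact Hc|]]. exists (A,[s]). split; [|apply rst_refl].
  split; [exact Hc|]. simpl. intros U HU. destruct (sub1 G s U HU) as [->| ->]; simpl.
  - rewrite mul1g; exact HA.
  - rewrite mulg1; exact HsA.
Qed.

Lemma edge_ls (G:Group) (GS:GlidingSystem G) (Hreg : regular GS) D (A s t : G) :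
  indep GS s t -> s <> t -> D A -> D (mul s A) -> D (mul t A) -> D (mul s (mul t A)) ->
  link_simplex GS D A [s;t].
Proof.
  intros Hi Hst HA HsA HtA HstA.
  destruct (indep_glides GS s t Hi) as [Hgs Hgt].
  assert (Hc : cubic GS [s;t]).
  { apply Hreg. split; [repeat constructor; simpl; intuition| split].
    - intros x Hx; simpl in Hx; destruct Hx as [<-|[<-|[]]]; assumption.
    - intros x y Hx Hy Hxy; simpl in *.
      destruct Hx as [<-|[<-|[]]]; destruct Hy as [<-|[<-|[]]]; try tauto.
      apply (indep_sym GS); exact Hi. }
  split; [discriminate| split; [exact Hc|]]. exists (A,[s;t]). split; [|apply rst_refl].
  split; [exact Hc|]. simpl. intros U HU.
  destruct (sub2 G s t U Hst HU) as [->|[->|[->|[->| ->]]]]; simpl.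
  - rewrite mul1g; exact HA.
  - rewrite mulg1; exact HsA.
  - rewrite mulg1; exact HtA.
  - rewrite mulg1, <- mulA; exact HstA.
  - rewrite mulg1, <- (indep_comm GS s t Hi), <- mulA; exact HstA.
Qed.

Lemma forward (G:Group) (GS:GlidingSystem G) (Hreg : regular GS) D :
  NPC GS D -> cube_condition GS D.
Proof.
  intros HN A s1 s2 s3 HA d12 d13 d23 i12 i13 i23 D1 D2 D3 D12 D13 D23.
  assert (Hv : in_XD GS D (A, [])).
  { split.
    - apply Hreg. split; [constructor| split; intros; simpl in *; tauto].
    - simpl. intros U HU. rewrite (subl_nil_inv G U HU). simpl. rewrite mul1g. exact HA. }
  destruct (HN A Hv) as [_ Hflag].
  assert (comm21 : forall x y, indep GS x y -> D (mul x (mul y A)) -> D (mul y (mul x A))).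
  { intros x y Hi H. rewrite mulA, <- (indep_comm GS x y Hi), <- mulA. exact H. }
  assert (HL : link_simplex GS D A [s1;s2;s3]).
  { apply Hflag.
    - discriminate.
    - repeat constructor; simpl; intuition.
    - intros s Hs. simpl in Hs. destruct Hs as [<-|[<-|[<-|[]]]]; apply vertex_ls; auto.
      + exact (proj1 (indep_glides GS _ _ i12)).
      + exact (proj2 (indep_glides GS _ _ i12)).
      + exact (proj2 (indep_glides GS _ _ i13)).
    - intros s t Hs Ht Hst. simpl in Hs, Ht.
      destruct Hs as [<-|[<-|[<-|[]]]]; destruct Ht as [<-|[<-|[<-|[]]]]; try tauto;
        apply edge_ls; auto; try (apply (indep_sym GS); assumption); try (apply comm21; auto). }
  destruct (link_in_XD G GS D A _ HL) as [Hc HD].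
  specialize (HD [s1;s2;s3]). simpl in HD. rewrite mulg1, <- !mulA in HD. apply HD.
  split; [repeat constructor; simpl; intuition| intros z Hz; exact Hz].
Qed.

Theorem corollary4p5 (G : Group) (GS : GlidingSystem G) (Hreg : regular GS) :
  (forall D : G -> Prop, NPC GS D <-> cube_condition GS D) /\
  NPC GS (fun _ : G => True).
Proof.
  split.
  - intro D. split; [apply forward; exact Hreg| apply backward; exact Hreg].
  - apply backward; [exact Hreg|]. unfold cube_condition; intros; exact I.
Qed.
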